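(* Let $\sigma$ be a signature containing $\triangleright$, let $\mathcal{A}$ be a $\sigma$-algebra and let $\theta$ be a representation of $\mathcal{A}$ by partial functions. If $\theta$ is locally complete, then $\theta$ is join complete.
   Context: Signatures $\sigma$ are sets of operation symbols drawn from: $\triangleright$ (antidomain restriction), $;$ (composition), $\wedge$ (intersection), $\mathrm{upd}$ (update), $\sqcup$ (preferential union), $\mathsf{D}$ (domain), $\mathsf{A}$ (antidomain), interpreted on partial functions as: $f \triangleright g = \{(x,y) \in g : x \notin \mathrm{dom}(f)\}$; $f;g$ = relational composition ($f$ first); $f\wedge g = f\cap g$; $\mathrm{upd}(f,g)(x)$ is $f(x)$ if $f(x)$ defined and $g(x)$ undefined, $g(x)$ if both defined, undefined otherwise; $(f\sqcup g)(x)$ is $f(x)$ if defined, else $g(x)$; $\mathsf{D}(f)$ = identity on $\mathrm{dom}(f)$; $\mathsf{A}(f)$ = identity on the complement of $\mathrm{dom}(f)$ in the base. A representation by partial functions is an isomorphism onto a $\sigma$-algebra of partial functions with these operations. Define $0 := a\triangleright a$, $a\lhd b := (a\triangleright b)\triangleright b$, $a \le b :\iff a\lhd b = a$; for representable algebras this is a partial order and $a\le b \iff \theta(a)\subseteq\theta(b)$ for any representation $\theta$. For representable $\mathcal{A}$ and $a\in\mathcal{A}$, ${\downarrow}a=\{b : b\le a\}$ is a Boolean algebra with bottom $0$, top $a$, meet $\lhd$ and complement $b\mapsto b\triangleright a$, and $\theta$ restricts to a representation of it as a field of sets over $\theta(a)$. $\theta$ is locally complete if for every $a$ this restriction is a complete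 representation of ${\downarrow}a$ (preserves all existing joins as unions and existing meets of nonempty sets as intersections). $\theta$ is join complete if for every $S \subseteq \mathcal{A}$ with $\bigvee S$ existing in $(\mathcal{A},\le)$, $\theta(\bigvee S)=\bigcup\theta[S]$. *)

(* Defs.v *)
(* Partial functions on a base X are represented as functional
   binary relations X -> X -> Prop; equality of partial functions is
   extensional equality of graphs. *)

Inductive symbol : Type :=
  | SAnte
  | SComp
  | SMeet
  | SUpd
  | SPref
  | SDom
  | SAdom.

Definition signature := symbol -> Prop.

(** Operations of an algebra over carrier [A].  An algebra of signature
    [sigma] only uses the operations whose symbol lies in [sigma]; the other
    fields are ignored (see [representation]). *)
Record ops (A : Type) : Type := Ops {
  o_ante : A -> A -> A;
  o_comp : A -> A -> A;
  o_meet : A -> A -> A;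
  o_upd  : A -> A -> A;
  o_pref : A -> A -> A;
  o_dom  : A -> A;
  o_adom : A -> A }.
Arguments o_ante {A} _ _ _.
Arguments o_comp {A} _ _ _.
Arguments o_meet {A} _ _ _.
Arguments o_upd  {A} _ _ _.
Arguments o_pref {A} _ _ _.
Arguments o_dom  {A} _ _.
Arguments o_adom {A} _ _.

Section PFun.
Variable X : Type.
Definition pfun := X -> X -> Prop.

Definition functional (f : pfun) : Prop :=
  forall x y z, f x y -> f x z -> y = z.

Definition defined (f : pfun) (x : X) : Prop := exists y, f x y.

Definition pf_eq (f g : pfun) : Prop := forall x y, f x y <-> g x y.
Definition pf_sub (f g : pfun) : Prop := forall x y, f x y -> g x y.

Definition pf_ante (f g : pfun) : pfun := fun x y => g x y /\ ~ defined f x.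
Definition pf_comp (f g : pfun) : pfun := fun x y => exists z, f x z /\ g z y.
Definition pf_meet (f g : pfun) : pfun := fun x y => f x y /\ g x y.
Definition pf_upd (f g : pfun) : pfun := fun x y =>
  (f x y /\ ~ defined g x) \/ (g x y /\ defined f x).
Definition pf_pref (f g : pfun) : pfun := fun x y =>
  f x y \/ (g x y /\ ~ defined f x).
Definition pf_dom (f : pfun) : pfun := fun x y => x = y /\ defined f x.
Definition pf_adom (f : pfun) : pfun := fun x y => x = y /\ ~ defined f x.
End PFun.
Arguments functional {X} _.
Arguments defined {X} _ _.
Arguments pf_eq {X} _ _.
Arguments pf_sub {X} _ _.
Arguments pf_ante {X} _ _ _ _.
Arguments pf_comp {X} _ _ _ _.
Arguments pf_meet {X} _ _ _ _.
Arguments pf_upd {X} _ _ _ _.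
Arguments pf_pref {X} _ _ _ _.
Arguments pf_dom {X} _ _ _.
Arguments pf_adom {X} _ _ _.

Definition representation (sigma : signature) {A : Type} (O : ops A)
    {X : Type} (theta : A -> pfun X) : Prop :=
  (forall a, functional (theta a)) /\
  (forall a b, pf_eq (theta a) (theta b) -> a = b) /\
  (sigma SAnte -> forall a b,
      pf_eq (theta (o_ante O a b)) (pf_ante (theta a) (theta b))) /\
  (sigma SComp -> forall a b,
      pf_eq (theta (o_comp O a b)) (pf_comp (theta a) (theta b))) /\
  (sigma SMeet -> forall a b,
      pf_eq (theta (o_meet O a b)) (pf_meet (theta a) (theta b))) /\
  (sigma SUpd -> forall a b,
      pf_eq (theta (o_upd O a b)) (pf_upd (theta a) (theta b))) /\
  (sigma SPref -> forall a b,
      pf_eq (theta (o_pref O a b)) (pf_pref (theta a) (theta b))) /\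
  (sigma SDom -> forall a,
      pf_eq (theta (o_dom O a)) (pf_dom (theta a))) /\
  (sigma SAdom -> forall a,
      pf_eq (theta (o_adom O a)) (pf_adom (theta a))).

Definition alg_lhd {A : Type} (O : ops A) (a b : A) : A :=
  o_ante O (o_ante O a b) b.
Definition alg_le {A : Type} (O : ops A) (a b : A) : Prop :=
  alg_lhd O a b = a.

Definition is_join_in {A : Type} (O : ops A) (P S : A -> Prop) (j : A) : Prop :=
  P j /\ (forall s, S s -> alg_le O s j) /\
  (forall u, P u -> (forall s, S s -> alg_le O s u) -> alg_le O j u).

Definition is_meet_in {A : Type} (O : ops A) (P S : A -> Prop) (m : A) : Prop :=
  P m /\ (forall s, S s -> alg_le O m s) /\
  (forall u, P u -> (forall s, S s -> alg_le O u s) -> alg_le O u m).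

Definition down {A : Type} (O : ops A) (a : A) : A -> Prop :=
  fun b => alg_le O b a.

Definition locally_complete {A : Type} (O : ops A) {X : Type}
    (theta : A -> pfun X) : Prop :=
  forall a : A,
    (forall (S : A -> Prop) (j : A),
        (forall s, S s -> down O a s) ->
        is_join_in O (down O a) S j ->
        forall x y, theta j x y <-> exists s, S s /\ theta s x y) /\
    (forall (S : A -> Prop) (m : A),
        (forall s, S s -> down O a s) ->
        (exists s, S s) ->
        is_meet_in O (down O a) S m ->
        forall x y, theta m x y <-> forall s, S s -> theta s x y).

Definition join_complete {A : Type} (O : ops A) {X : Type}
    (theta : A -> pfun X) : Prop :=
  forall (S : A -> Prop) (j : A),
    is_join_in O (fun _ => True) S j ->
    forall x y, theta j x y <-> exists s, S s /\ theta s x y.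

(* Main.v *)
Require Import Defs.

Theorem lemma3p5 (sigma : signature) (Hsig : sigma SAnte)
    (A : Type) (O : ops A) (X : Type) (theta : A -> pfun X)
    (Hrep : representation sigma O theta) :
  locally_complete O theta -> join_complete O theta.
Proof.
  intros LC S j [_ [Hub Hl]].
  destruct Hrep as [_ [Hinj [Hante _]]].
  specialize (Hante Hsig).
  assert (Hjj : alg_le O j j).
  { unfold alg_le, alg_lhd. apply Hinj. intros x y.
    split.
    - intros H. apply (Hante _ _ x y) in H. destruct H as [H _]; exact H.
    - intros H. apply (Hante _ _ x y). split; [exact H|]. intros [z Hz].
      apply (Hante _ _ x z) in Hz. destruct Hz as [_ Hn]. apply Hn. exists y; exact H. }
  destruct (LC j) as [LJ _].
  apply (LJ S j).
  - intros s Hs; apply Hub; exact Hs.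
  - split; [exact Hjj|]. split.
    + exact Hub.
    + intros u _ Hu. apply Hl; [exact I| exact Hu].
Qed.
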